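(* Let $\beta\in(0,2]$, $N>0$, and let $B$ be a Young function with $B(t)=Ne^{t^\beta}$ for all $t>t_0$ (some $t_0>0$), $B(t)=\int_0^tb$ with $b$ non-decreasing and left-continuous. For $t>0$ let $\lambda_t>0$ satisfy $\int_0^tB(b^{-1}(\lambda_te^{\tau^2/2}))e^{-\tau^2/2}\,d\tau=\sqrt{2\pi}$. Then $$\lim_{t\to\infty}\frac{\lambda_t}{c_\beta\,t^{1-\frac2\beta}}=1\ \text{ if }\beta\in(0,2),\qquad \lim_{t\to\infty}\frac{\lambda_t\log t}{c_2}=1\ \text{ if }\beta=2,$$ where $c_\beta=2^{\frac1\beta-\frac12}\sqrt\pi\,(2-\beta)$ for $\beta\in(0,2)$ and $c_2=2\sqrt\pi$.
   Context: A Young function is a convex $B\colon[0,\infty)\to[0,\infty]$ with $B(0)=0$; $b^{-1}(s)=\inf\{r\ge0:b(r)\ge s\}$ is the left-continuous generalized inverse of $b$. *)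

(* Defs.v *)
From Stdlib Require Import Reals.
Open Scope R_scope.

Definition is_inf (E : R -> Prop) (m : R) : Prop :=
  (forall x, E x -> m <= x) /\ (forall m', (forall x, E x -> m' <= x) -> m' <= m).

Definition is_gen_inv (b binv : R -> R) : Prop :=
  forall s, is_inf (fun r => 0 <= r /\ s <= b r) (binv s).

(* Young function (real-valued here): convex on [0,oo), nonnegative, B 0 = 0 *)
Definition young (B : R -> R) : Prop :=
  B 0 = 0 /\ (forall t, 0 <= t -> 0 <= B t) /\
  (forall x y th, 0 <= x -> 0 <= y -> 0 <= th <= 1 ->
     B (th * x + (1 - th) * y) <= th * B x + (1 - th) * B y).

Definition nondecr_on_nonneg (b : R -> R) : Prop :=
  forall x y, 0 <= x -> x <= y -> b x <= b y.

Definition left_cont_pos (b : R -> R) : Prop :=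
  forall x, 0 < x -> forall eps, 0 < eps ->
    exists d, 0 < d /\ forall y, 0 < y -> x - d < y -> y <= x -> Rabs (b y - b x) < eps.

Definition lim_infty (f : R -> R) (l : R) : Prop :=
  forall eps, 0 < eps -> exists M, forall t, M < t -> Rabs (f t - l) < eps.

Definition c_beta (beta : R) : R :=
  Rpower 2 (1 / beta - 1 / 2) * sqrt PI * (2 - beta).

(* Main.v *)
Require Import Defs.
From Stdlib Require Import Reals Lra Classical.
From Coquelicot Require Import Coquelicot.
Open Scope R_scope.


Lemma inf1 (b binv : R -> R) : is_gen_inv b binv ->
  forall s x, 0 <= x -> x < binv s -> b x < s.
Proof.
  intros H s x Hx Hlt. destruct (Rlt_le_dec (b x) s) as [h|h]; auto.
  destruct (H s) as [H1 _]. specialize (H1 x (conj Hx h)). lra.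
Qed.

Lemma inf0 (b binv : R -> R) : is_gen_inv b binv -> forall s, 0 <= binv s.
Proof.
  intros H s. destruct (H s) as [_ H2]. apply H2. intros x [Hx _]; exact Hx.
Qed.

Lemma inf2 (b binv : R -> R) : is_gen_inv b binv ->
  forall s h, 0 < h -> exists x, binv s <= x < binv s + h /\ 0 <= x /\ s <= b x.
Proof.
  intros H s h Hh. apply NNPP; intro C.
  destruct (H s) as [H1 H2].
  assert (binv s + h <= binv s); [|lra].
  apply H2. intros x Hx. destruct (Rlt_le_dec x (binv s + h)) as [l|l]; auto.
  exfalso; apply C. exists x. pose proof (H1 x Hx). destruct Hx. repeat split; lra.
Qed.

Lemma binv_mono (b binv : R -> R) : is_gen_inv b binv ->
  forall s1 s2, s1 <= s2 -> binv s1 <= binv s2.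
Proof.
  intros H s1 s2 Hs. destruct (H s2) as [_ H2]. apply H2.
  intros x [Hx Hb]. destruct (H s1) as [H1 _]. apply H1. split; lra.
Qed.

Lemma binv_big (b binv : R -> R) : is_gen_inv b binv -> nondecr_on_nonneg b ->
  forall R0 s, 0 <= R0 -> b (R0 + 1) < s -> R0 < binv s.
Proof.
  intros H Hm R0 s HR Hs. destruct (Rlt_le_dec R0 (binv s)) as [l|l]; auto.
  destruct (inf2 b binv H s 1 Rlt_0_1) as [x [[Hx1 Hx2] [Hx3 Hx4]]].
  pose proof (Hm x (R0+1) Hx3 ltac:(lra)). lra.
Qed.


Lemma Bex (B b : R -> R) : (forall t, 0 <= t ->
     exists pr : Riemann_integrable b 0 t, RiemannInt pr = B t) ->
  forall y, 0 <= y -> ex_RInt b 0 y /\ RInt b 0 y = B y.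
Proof.
  intros H y Hy. destruct (H y Hy) as [pr E]. split.
  - exact (ex_RInt_Reals_1 _ _ _ pr).
  - rewrite (RInt_Reals _ _ _ pr). exact E.
Qed.

Lemma Bdiff (B b : R -> R) : (forall t, 0 <= t ->
     exists pr : Riemann_integrable b 0 t, RiemannInt pr = B t) ->
  forall x y, 0 <= x <= y -> ex_RInt b x y /\ B y - B x = RInt b x y.
Proof.
  intros H x y Hxy. destruct (Bex B b H y ltac:(lra)) as [Ey Iy].
  destruct (Bex B b H x ltac:(lra)) as [Ex Ix].
  assert (E2 : ex_RInt b x y) by (apply (ex_RInt_Chasles_2 b 0 x y); auto).
  split; auto.
  rewrite <- Iy, <- Ix, <- (RInt_Chasles b 0 x y Ex E2).
  unfold plus; simpl; ring.
Qed.

Lemma Bint_le (B b : R -> R) : (forall t, 0 <= t ->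
     exists pr : Riemann_integrable b 0 t, RiemannInt pr = B t) ->
  forall x y c, 0 <= x <= y -> (forall z, x < z < y -> b z <= c) ->
  B y - B x <= c * (y - x).
Proof.
  intros H x y c Hxy Hc. destruct (Bdiff B b H x y Hxy) as [E I]. rewrite I.
  replace (c * (y - x)) with (RInt (fun _ => c) x y).
  2: { rewrite RInt_const. unfold scal; simpl; unfold mult; simpl. ring. }
  apply RInt_le; auto; try lra. apply ex_RInt_const.
Qed.

Lemma Bint_ge (B b : R -> R) : (forall t, 0 <= t ->
     exists pr : Riemann_integrable b 0 t, RiemannInt pr = B t) ->
  forall x y c, 0 <= x <= y -> (forall z, x < z < y -> c <= b z) ->
  c * (y - x) <= B y - B x.
Proof.
  intros H x y c Hxy Hc. destruct (Bdiff B b H x y Hxy) as [E I]. rewrite I.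
  replace (c * (y - x)) with (RInt (fun _ => c) x y).
  2: { rewrite RInt_const. unfold scal; simpl; unfold mult; simpl. ring. }
  apply RInt_le; auto; try lra. apply ex_RInt_const.
Qed.

Lemma b_nonneg (B b : R -> R) : young B -> nondecr_on_nonneg b ->
  (forall t, 0 <= t -> exists pr : Riemann_integrable b 0 t, RiemannInt pr = B t) ->
  forall z, 0 < z -> 0 <= b z.
Proof.
  intros [HB0 [HBp _]] Hm H z Hz.
  pose proof (Bint_le B b H 0 z (b z) ltac:(lra) (fun w Hw => Hm w z ltac:(lra) ltac:(lra))).
  pose proof (HBp z ltac:(lra)). rewrite HB0 in H0.
  destruct (Rle_dec 0 (b z)); auto. nra.
Qed.

Lemma B_mono (B b : R -> R) : young B -> nondecr_on_nonneg b ->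
  (forall t, 0 <= t -> exists pr : Riemann_integrable b 0 t, RiemannInt pr = B t) ->
  forall x y, 0 <= x <= y -> B x <= B y.
Proof.
  intros HY Hm H x y Hxy.
  pose proof (Bint_ge B b H x y 0 Hxy (fun z Hz => b_nonneg B b HY Hm H z ltac:(lra))).
  lra.
Qed.

Lemma F_mono (B b binv : R -> R) : young B -> nondecr_on_nonneg b ->
  (forall t, 0 <= t -> exists pr : Riemann_integrable b 0 t, RiemannInt pr = B t) ->
  is_gen_inv b binv ->
  forall s1 s2, s1 <= s2 -> B (binv s1) <= B (binv s2).
Proof.
  intros HY Hm H Hi s1 s2 Hs. apply (B_mono B b HY Hm H).
  split. apply (inf0 b binv Hi). apply (binv_mono b binv Hi); auto.
Qed.

Lemma F_le (B b binv : R -> R) : young B ->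
  (forall t, 0 <= t -> exists pr : Riemann_integrable b 0 t, RiemannInt pr = B t) ->
  is_gen_inv b binv ->
  forall s, B (binv s) <= s * binv s.
Proof.
  intros [HB0 _] H Hi s. pose proof (inf0 b binv Hi s).
  pose proof (Bint_le B b H 0 (binv s) s ltac:(lra)
    (fun z Hz => Rlt_le _ _ (inf1 b binv Hi s z ltac:(lra) ltac:(lra)))).
  rewrite HB0 in H1. lra.
Qed.

Lemma s_phi (beta N t0 : R) (B b binv : R -> R)
  (Ht0 : 0 < t0)
  (HBexp : forall t, t0 < t -> B t = N * exp (Rpower t beta))
  (Hbmono : nondecr_on_nonneg b)
  (HBint : forall t, 0 <= t ->
     exists pr : Riemann_integrable b 0 t, RiemannInt pr = B t)
  (Hbinv : is_gen_inv b binv) :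
  forall s, t0 < binv s ->
  s = N * (beta * (1 * / binv s) * exp (beta * ln (binv s)) * exp (exp (beta * ln (binv s)))).
Proof.
  intros s Hr. set (r := binv s) in *.
  set (l := N * (beta * (1 * / r) * exp (beta * ln r) * exp (exp (beta * ln r)))).
  set (G := fun x => N * exp (exp (beta * ln x))).
  assert (HD : derivable_pt_lim G r l).
  { apply is_derive_Reals. unfold G, l. auto_derive. all: try lra. all: try ring. }
  assert (HG : forall x, t0 < x -> B x = G x).
  { intros x Hx. rewrite HBexp; auto. }
  destruct (Rtotal_order s l) as [Hlt|[Heq|Hgt]]; auto; exfalso.
  - destruct (HD (l - s) ltac:(lra)) as [d Hd].
    set (h := Rmin d (r - t0) / 2).
    assert (Hh : 0 < h) by (unfold h; pose proof (cond_pos d); assert (0 < Rmin d (r - t0)) by (apply Rmin_glb_lt; lra); lra).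
    assert (Hh1 : h < d) by (unfold h; pose proof (Rmin_l d (r-t0)); pose proof (cond_pos d); lra).
    assert (Hh2 : h < r - t0) by (unfold h; pose proof (Rmin_r d (r-t0)); lra).
    specialize (Hd (-h) ltac:(lra) ltac:(rewrite Rabs_Ropp, Rabs_right; lra)).
    assert (H := Bint_le B b HBint (r - h) r s ltac:(lra)
       (fun z Hz => Rlt_le _ _ (inf1 b binv Hbinv s z ltac:(lra) ltac:(unfold r in Hz; lra)))).
    rewrite !HG in H by lra. replace (r + - h) with (r - h) in Hd by ring.
    assert (E : (G (r - h) - G r) / - h = (G r - G (r - h)) / h) by (field; lra).
    rewrite E in Hd. apply Rabs_def2 in Hd. destruct Hd as [_ Hd].
    assert ((G r - G (r - h)) / h <= s).
    { apply (Rmult_le_reg_r h); auto. unfold Rdiv. rewrite Rmult_assoc, Rinv_l by lra. lra. }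
    lra.
  - destruct (HD ((s - l)/3) ltac:(lra)) as [d Hd].
    set (h := Rmin d (r - t0) / 4).
    assert (Hh : 0 < h) by (unfold h; pose proof (cond_pos d); assert (0 < Rmin d (r - t0)) by (apply Rmin_glb_lt; lra); lra).
    assert (Hh1 : 2 * h < d) by (unfold h; pose proof (Rmin_l d (r-t0)); pose proof (cond_pos d); lra).
    pose proof (Hd h ltac:(lra) ltac:(rewrite Rabs_right; lra)) as Q1.
    pose proof (Hd (2*h) ltac:(lra) ltac:(rewrite Rabs_right; lra)) as Q2.
    destruct (inf2 b binv Hbinv s h Hh) as [x0 [[X1 X2] [X3 X4]]].
    assert (H := Bint_ge B b HBint (r + h) (r + 2*h) s ltac:(lra)
       (fun z Hz => Rle_trans _ _ _ X4 (Hbmono x0 z X3 ltac:(unfold r in *; lra)))).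
    rewrite !HG in H by lra.
    apply Rabs_def2 in Q1. apply Rabs_def2 in Q2.
    set (q1 := (G (r + h) - G r) / h) in *.
    set (q2 := (G (r + 2*h) - G r) / (2*h)) in *.
    assert (E1 : G (r + h) = G r + h * q1) by (unfold q1; field; lra).
    assert (E2 : G (r + 2*h) = G r + 2 * h * q2) by (unfold q2; field; lra).
    rewrite E1, E2 in H.
    assert (s <= 2 * q2 - q1) by nra. lra.
Qed.

Lemma exp_minus x y : exp (x - y) = exp x / exp y.
Proof. unfold Rminus, Rdiv. rewrite exp_plus, exp_Ropp. reflexivity. Qed.

Lemma exp_le x y : x <= y -> exp x <= exp y.
Proof. intros [H|H]. apply Rlt_le, exp_increasing; auto. subst; lra. Qed.

Lemma ln_le_xm1 x : 0 < x -> ln x <= x - 1.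
Proof. intros Hx. pose proof (exp_ineq1_le (ln x)). rewrite exp_ln in H; lra. Qed.

Lemma ln_le_sqrt x : 0 < x -> ln x <= 2 * sqrt x.
Proof.
  intros Hx. pose proof (sqrt_lt_R0 x Hx).
  replace x with (sqrt x * sqrt x) at 1 by (apply sqrt_sqrt; lra).
  rewrite ln_mult by lra. pose proof (ln_le_xm1 (sqrt x) H). lra.
Qed.

Lemma sqrt_dom a b A : 0 < b -> exists X, 0 < X /\ forall x, X <= x -> a * sqrt x - b * x <= A.
Proof.
  intros Hb. set (K := (Rabs a + Rabs A + 1) / b).
  exists (Rmax 1 (K * K)). split. { pose proof (Rmax_l 1 (K*K)); lra. }
  intros x Hx. pose proof (Rmax_l 1 (K*K)). pose proof (Rmax_r 1 (K*K)).
  assert (Hx0 : 0 <= x) by lra.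
  assert (Hs1 : 1 <= sqrt x). { rewrite <- sqrt_1. apply sqrt_le_1_alt. lra. }
  assert (HK : 0 < K) by (unfold K; apply Rdiv_lt_0_compat; [pose proof (Rabs_pos a); pose proof (Rabs_pos A); lra | lra]).
  assert (Hs2 : K <= sqrt x). { rewrite <- (sqrt_square K) by lra. apply sqrt_le_1_alt. lra. }
  assert (E : b * x = b * sqrt x * sqrt x) by (rewrite Rmult_assoc, sqrt_sqrt; lra).
  rewrite E.
  assert (b * K = Rabs a + Rabs A + 1) by (unfold K; field; lra).
  assert (a - b * sqrt x <= - Rabs A - 1).
  { pose proof (Rle_abs a). assert (b * K <= b * sqrt x) by (apply Rmult_le_compat_l; lra). lra. }
  pose proof (Rabs_pos A). pose proof (Rle_abs (-A)). rewrite Rabs_Ropp in H4.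
  assert (a * sqrt x - b * sqrt x * sqrt x = sqrt x * (a - b * sqrt x)) by ring.
  rewrite H5. assert (sqrt x * (a - b * sqrt x) <= 1 * (- Rabs A - 1)).
  { apply Rle_trans with (sqrt x * (- Rabs A - 1)). apply Rmult_le_compat_l; lra. nra. }
  lra.
Qed.

Lemma PW (beta N t0 : R) (B b binv : R -> R)
  (Hbeta : 0 < beta) (HN : 0 < N) (Ht0 : 0 < t0)
  (HBexp : forall t, t0 < t -> B t = N * exp (Rpower t beta))
  (Hbmono : nondecr_on_nonneg b)
  (HBint : forall t, 0 <= t ->
     exists pr : Riemann_integrable b 0 t, RiemannInt pr = B t)
  (Hbinv : is_gen_inv b binv) :
  forall eps, 0 < eps <= 1/2 -> exists S, 1 < S /\ 2 <= ln S /\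
   forall s, S <= s -> t0 < binv s /\
     B (binv s) = s * exp ((1 - beta) * ln (binv s)) / beta /\
     (1 - eps) * ln s <= exp (beta * ln (binv s)) <= (1 + eps) * ln s.
Proof.
  intros eps Heps.
  set (A0 := ln (N * beta)). set (A1 := (beta - 1) / beta).
  destruct (sqrt_dom (2 * Rabs A1) (eps/2) (- Rabs A0) ltac:(lra)) as [Y [HY0 HY]].
  set (Y' := Rmax Y 1).
  set (R1 := Rmax (exp (ln Y' / beta)) t0).
  set (S := Rmax (b (R1 + 1) + 1) (exp 2)).
  assert (HS1 : exp 2 <= S) by apply Rmax_r.
  assert (HS2 : b (R1 + 1) + 1 <= S) by apply Rmax_l.
  assert (He2 : 1 < exp 2) by (rewrite <- exp_0; apply exp_increasing; lra).
  exists S. split; [lra|]. split.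
  { rewrite <- (ln_exp 2) at 1. apply ln_le; [apply exp_pos| auto]. }
  intros s Hs.
  assert (HR1 : t0 <= R1) by apply Rmax_r.
  assert (Hr : R1 < binv s) by (apply (binv_big b binv Hbinv Hbmono); lra).
  set (r := binv s) in *.
  assert (Hr0 : 0 < r) by lra.
  assert (Hs' := s_phi beta N t0 B b binv Ht0 HBexp Hbmono HBint Hbinv s ltac:(unfold r in *; lra)).
  fold r in Hs'.
  set (y := exp (beta * ln r)) in *.
  assert (Hy : 0 < y) by apply exp_pos.
  assert (Hyr : exp ((1 - beta) * ln r) = r / y).
  { unfold y. replace ((1 - beta) * ln r) with (ln r - beta * ln r) by ring.
    rewrite exp_minus, exp_ln by lra. reflexivity. }
  split; [lra|]. split.
  { rewrite HBexp by lra. unfold Rpower. fold y. rewrite Hyr, Hs'. field. lra. }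
  assert (HYY : Y' <= y).
  { assert (H0 : exp (ln Y' / beta) <= R1) by apply Rmax_l.
    assert (H : exp (ln Y' / beta) <= r) by lra. clear H0.
    assert (HY'0 : 0 < Y') by (unfold Y'; pose proof (Rmax_r Y 1); lra).
    apply ln_le in H; [|apply exp_pos]. rewrite ln_exp in H.
    unfold y. rewrite <- (exp_ln Y') by lra. apply exp_le.
    apply (Rmult_le_compat_l beta) in H; [|lra].
    replace (beta * (ln Y' / beta)) with (ln Y') in H by (field; lra). lra. }
  assert (HyY : Y <= y) by (pose proof (Rmax_l Y 1); unfold Y' in *; lra).
  assert (Hy1 : 1 <= y) by (pose proof (Rmax_r Y 1); unfold Y' in *; lra).
  assert (Hlns : ln s = y + A0 + A1 * ln y).
  { rewrite Hs'. unfold A0, A1, y. rewrite ln_exp.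
    assert (0 < exp (exp (beta * ln r))) by apply exp_pos.
    assert (0 < exp (beta * ln r)) by apply exp_pos.
    rewrite !ln_mult; try (apply Rmult_lt_0_compat); try apply Rmult_lt_0_compat; try lra;
      try (apply Rinv_0_lt_compat; lra); try apply exp_pos.
    rewrite !ln_exp, ln_1, ln_Rinv by lra. field. lra.
    all: assert (0 < / r) by (apply Rinv_0_lt_compat; lra); nra. }
  assert (Hbnd : Rabs (A0 + A1 * ln y) <= eps / 2 * y).
  { pose proof (HY y HyY) as K1.
    pose proof (ln_le_sqrt y Hy) as K2. assert (K3 : 0 <= ln y) by (rewrite <- ln_1; apply ln_le; lra).
    pose proof (Rabs_triang A0 (A1 * ln y)) as K4. rewrite Rabs_mult, (Rabs_right (ln y)) in K4 by lra.
    pose proof (Rabs_pos A1) as K5.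
    assert (Rabs A1 * ln y <= Rabs A1 * (2 * sqrt y)) by (apply Rmult_le_compat_l; lra).
    lra. }
  apply Rabs_le_between in Hbnd. rewrite Hlns. split; nra.
Qed.

Lemma RInt_pow (Phi : R -> R) (q K a b : R) :
  (forall x, 0 < x -> is_derive Phi x (exp ((q - 1) * ln x))) ->
  0 < a <= b ->
  ex_RInt (fun x => K * exp ((q - 1) * ln x)) a b /\
  RInt (fun x => K * exp ((q - 1) * ln x)) a b = K * (Phi b - Phi a).
Proof.
  intros HP Hab.
  assert (Hc : forall x, 0 < x -> continuous (fun x => exp ((q - 1) * ln x)) x).
  { intros x Hx. apply (ex_derive_continuous (K := R_AbsRing) (V := R_NormedModule)). auto_derive. lra. }
  assert (HI : is_RInt (fun x => exp ((q - 1) * ln x)) a b (minus (Phi b) (Phi a))).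
  { apply (is_RInt_derive (V := R_CompleteNormedModule)); intros x Hx; rewrite Rmin_left, Rmax_right in Hx by lra.
    apply HP; lra. apply Hc; lra. }
  assert (HE : ex_RInt (fun x => exp ((q - 1) * ln x)) a b) by (eexists; eauto).
  split.
  - apply (ex_RInt_scal _ a b K) in HE. exact HE.
  - pose proof (RInt_scal (V := R_CompleteNormedModule) (fun x => exp ((q - 1) * ln x)) a b K) as E.
    unfold scal in E; simpl in E; unfold mult in E; simpl in E. rewrite E.
    rewrite (is_RInt_unique _ _ _ _ HI). unfold minus, plus, opp; simpl. ring. exact HE.
Qed.

Lemma ln_1m_ge e : 0 <= e <= 1/2 -> - (2 * e) <= ln (1 - e).
Proof.
  intros He. assert (0 < 1 - e) by lra.
  pose proof (ln_le_xm1 (/ (1 - e)) ltac:(apply Rinv_0_lt_compat; lra)).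
  rewrite ln_Rinv in H0 by lra.
  assert (/ (1 - e) - 1 <= 2 * e).
  { apply (Rmult_le_reg_r (1 - e)); [lra|]. rewrite Rmult_minus_distr_r, Rinv_l by lra. nra. }
  lra.
Qed.

Lemma ln_1p_le e : 0 <= e -> ln (1 + e) <= e.
Proof. intros He. pose proof (ln_le_xm1 (1 + e)). lra. Qed.

Lemma KEYbnd (beta eps u v y : R) : 0 < beta -> 0 < eps <= 1/4 -> 0 < v ->
  (1 - eps) * u <= y <= (1 + eps) * u -> (1 - eps) * v <= u <= v ->
  Rabs ((1 - beta) / beta * ln y - (1 - beta) / beta * ln v) <= 4 * Rabs ((1 - beta) / beta) * eps.
Proof.
  intros Hb He Hv Hy Hu.
  assert (Hu0 : 0 < u) by nra. assert (Hy0 : 0 < y) by nra.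
  pose proof (ln_1m_ge eps ltac:(lra)). pose proof (ln_1p_le eps ltac:(lra)).
  assert (A1 : ln ((1 - eps) * u) <= ln y) by (apply ln_le; nra).
  assert (A2 : ln y <= ln ((1 + eps) * u)) by (apply ln_le; nra).
  assert (A3 : ln ((1 - eps) * v) <= ln u) by (apply ln_le; nra).
  assert (A4 : ln u <= ln v) by (apply ln_le; nra).
  rewrite ln_mult in A1, A2, A3 by lra.
  replace ((1 - beta) / beta * ln y - (1 - beta) / beta * ln v) with ((1 - beta) / beta * (ln y - ln v)) by ring.
  rewrite Rabs_mult. replace (4 * Rabs ((1 - beta) / beta) * eps) with (Rabs ((1 - beta) / beta) * (4 * eps)) by ring.
  apply Rmult_le_compat_l. apply Rabs_pos.
  apply Rabs_le. lra.
Qed.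

Lemma core (beta N t0 : R) (B b binv lam : R -> R)
  (Hbeta : 0 < beta) (HN : 0 < N) (Ht0 : 0 < t0)
  (HY : young B)
  (HBexp : forall t, t0 < t -> B t = N * exp (Rpower t beta))
  (Hbmono : nondecr_on_nonneg b)
  (HBint : forall t, 0 <= t ->
     exists pr : Riemann_integrable b 0 t, RiemannInt pr = B t)
  (Hbinv : is_gen_inv b binv)
  (Hlam : forall t, 0 < t -> 0 < lam t /\
     exists pr : Riemann_integrable
         (fun tau => B (binv (lam t * exp (tau ^ 2 / 2))) * exp (- (tau ^ 2 / 2))) 0 t,
       RiemannInt pr = sqrt (2 * PI))
  (c' : R) (L Phi : R -> R) (delta : R)
  (Hc : 0 < c') (Hd : 0 < delta <= 1/2)
  (HPhi : forall x, 0 < x -> is_derive Phi x (exp ((2/beta - 1 - 1) * ln x)))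
  (HL : forall t, 1 < t -> 0 < L t /\
      c' * L t * exp (- ((1-beta)/beta * ln 2)) * Phi t / beta = sqrt (2*PI))
  (HT : forall eps S C, 0 < eps < 1 -> 1 < S -> 0 < C -> exists T : R -> R, exists M, 1 <= M /\
      forall t, M < t ->
      1 <= T t <= t /\ (1+delta)*c'*L t <= 1 /\ - (eps * ((T t)^2/2)) <= ln ((1-delta)*c'*L t) /\
      ln S <= (1-eps)*((T t)^2/2) /\ 0 <= Phi (T t) /\ Phi (T t) <= delta/8 * Phi t /\
      (1-delta)*c'*L t * T t * C * (1 + exp (Rmax 0 ((1-beta)/beta) * (2 * ln (T t))))
        < delta/2 * sqrt (2*PI)) :
  exists M, forall t, M < t -> (1-delta)*c'*L t <= lam t <= (1+delta)*c'*L t.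
Proof.
  set (p := (1 - beta) / beta).
  set (eps := Rmin (1/4) (ln (1 + delta/2) / (4 * Rabs p + 1))).
  assert (Hl2 : 0 < ln (1 + delta/2)) by (rewrite <- ln_1; apply ln_increasing; lra).
  assert (Hp0 : 0 <= Rabs p) by apply Rabs_pos.
  assert (Heps : 0 < eps <= 1/4).
  { unfold eps. split. apply Rmin_glb_lt. lra. apply Rdiv_lt_0_compat; lra. apply Rmin_l. }
  set (kap := 4 * Rabs p * eps).
  assert (Hkap0 : 0 <= kap) by (unfold kap; nra).
  assert (Hkap : exp kap <= 1 + delta/2).
  { rewrite <- (exp_ln (1 + delta/2)) by lra. apply exp_le. unfold kap.
    assert (eps <= ln (1 + delta/2) / (4 * Rabs p + 1)) by apply Rmin_r.
    assert (eps * (4 * Rabs p + 1) <= ln (1 + delta/2)).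
    { apply (Rmult_le_compat_r (4 * Rabs p + 1)) in H; [|lra].
      unfold Rdiv in H. rewrite Rmult_assoc, Rinv_l in H by lra. lra. }
    nra. }
  destruct (PW beta N t0 B b binv Hbeta HN Ht0 HBexp Hbmono HBint Hbinv eps ltac:(lra))
    as [S [HS1 [HS2 HPW]]].
  set (C := binv S + 1/beta).
  assert (HbS : 0 <= binv S) by apply (inf0 b binv Hbinv).
  assert (HC : 0 < C) by (unfold C; assert (0 < 1/beta) by (apply Rdiv_lt_0_compat; lra); lra).
  destruct (HT eps S C ltac:(lra) HS1 HC) as [Tf [M [HM HTf]]].
  exists M. intros t Ht.
  destruct (HTf t Ht) as [HT1 [Hl0 [Hl1 [HlS [HP0 [HP1 HC6]]]]]].
  destruct (HL t ltac:(lra)) as [HLt HLe].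
  set (T := Tf t) in *.
  set (l0 := (1 + delta) * c' * L t) in *.
  set (l1 := (1 - delta) * c' * L t) in *.
  assert (Hl1p : 0 < l1) by (unfold l1; apply Rmult_lt_0_compat; [apply Rmult_lt_0_compat|]; lra).
  assert (Hl01 : l1 <= l0) by (unfold l1, l0; assert (0 < c' * L t) by (apply Rmult_lt_0_compat; lra); nra).
  set (W := sqrt (2 * PI)).
  assert (HW : 0 < W) by (unfold W; apply sqrt_lt_R0; pose proof PI_RGT_0; lra).
  destruct (Hlam t ltac:(lra)) as [Hlamp [pr Hpr]].
  set (g := fun tau => B (binv (lam t * exp (tau ^ 2 / 2))) * exp (- (tau ^ 2 / 2))) in *.
  assert (Eg : ex_RInt g 0 t) by exact (ex_RInt_Reals_1 _ _ _ pr).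
  assert (Ig : RInt g 0 t = W) by (rewrite (RInt_Reals _ _ _ pr); exact Hpr).
  assert (Eg1 : ex_RInt g 0 T) by (apply (ex_RInt_Chasles_1 g 0 T t); auto; lra).
  assert (Eg2 : ex_RInt g T t) by (apply (ex_RInt_Chasles_2 g 0 T t); auto; lra).
  assert (Isplit : RInt g 0 T + RInt g T t = W).
  { rewrite <- Ig. rewrite <- (RInt_Chasles g 0 T t Eg1 Eg2). reflexivity. }
  assert (Hmono : forall l' tau, lam t <= l' -> g tau <= B (binv (l' * exp (tau ^ 2 / 2))) * exp (- (tau ^ 2 / 2))).
  { intros l' tau Hl'. unfold g. apply Rmult_le_compat_r. left; apply exp_pos.
    apply (F_mono B b binv HY Hbmono HBint Hbinv). apply Rmult_le_compat_r; [left; apply exp_pos|lra]. }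
  assert (Hmono' : forall l' tau, l' <= lam t -> B (binv (l' * exp (tau ^ 2 / 2))) * exp (- (tau ^ 2 / 2)) <= g tau).
  { intros l' tau Hl'. unfold g. apply Rmult_le_compat_r. left; apply exp_pos.
    apply (F_mono B b binv HY Hbmono HBint Hbinv). apply Rmult_le_compat_r; [left; apply exp_pos|lra]. }
  assert (Hpt : forall l' tau, 0 < l' <= l0 -> l1 <= l' -> T <= tau ->
     B (binv (l' * exp (tau ^ 2 / 2))) * exp (- (tau ^ 2 / 2)) =
       l' * exp ((1 - beta) * ln (binv (l' * exp (tau ^ 2 / 2)))) / beta /\
     Rabs ((1 - beta) * ln (binv (l' * exp (tau ^ 2 / 2))) - ((2/beta - 1 - 1) * ln tau - p * ln 2)) <= kap).
  { intros l' tau Hl' Hl'1 Htau.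
    set (v := tau ^ 2 / 2). set (s := l' * exp v).
    assert (Hv : 0 < v) by (unfold v; nra).
    assert (HTv : T ^ 2 / 2 <= v) by (unfold v; nra).
    assert (Hs0 : 0 < s) by (unfold s; apply Rmult_lt_0_compat; [lra|apply exp_pos]).
    assert (Hlns : ln s = ln l' + v) by (unfold s; rewrite ln_mult, ln_exp; [reflexivity|lra|apply exp_pos]).
    assert (Hll' : ln l1 <= ln l') by (apply ln_le; lra).
    assert (Hl'1' : ln l' <= 0) by (rewrite <- ln_1; apply ln_le; lra).
    assert (Hu1 : (1 - eps) * v <= ln s) by nra.
    assert (Hu2 : ln s <= v) by lra.
    assert (HsS : S <= s).
    { rewrite <- (exp_ln s), <- (exp_ln S) by lra. apply exp_le. nra. }
    destruct (HPW s HsS) as [Hr [HBr Hy]].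
    set (r := binv s) in *.
    split.
    - rewrite HBr. unfold s. rewrite exp_Ropp. assert (0 < exp v) by apply exp_pos. field. split; lra.
    - pose proof (KEYbnd beta eps (ln s) v (exp (beta * ln r)) Hbeta Heps Hv Hy (conj Hu1 Hu2)) as K.
      fold p in K. rewrite ln_exp in K.
      assert (E1 : (1 - beta) * ln r = p * (beta * ln r)) by (unfold p; field; lra).
      assert (E2 : (2/beta - 1 - 1) * ln tau - p * ln 2 = p * ln v).
      { unfold v. unfold Rdiv at 2. rewrite ln_mult by (try nra; lra).
        rewrite ln_Rinv by lra. replace (tau ^ 2) with (tau * tau) by ring.
        rewrite ln_mult by lra. unfold p. field. lra. }
      rewrite E1, E2. unfold kap. lra. }
  split.
  -
    destruct (Rle_lt_dec l1 (lam t)) as [Hok|Hlt]; [exact Hok|exfalso].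
    set (E := exp (Rmax 0 p * (2 * ln T))).
    assert (HE : 0 < E) by apply exp_pos.
    assert (Hb1 : RInt g 0 T <= RInt (fun _ => l1 * C * (1 + E)) 0 T).
    { apply RInt_le; auto; [lra|apply ex_RInt_const|].
      intros tau Htau. eapply Rle_trans; [apply (Hmono l1); lra|].
      set (v := tau ^ 2 / 2). set (s := l1 * exp v).
      assert (Hv : 0 < v) by (unfold v; nra).
      assert (Hs0 : 0 < s) by (unfold s; apply Rmult_lt_0_compat; [lra|apply exp_pos]).
      assert (Hsv : s * exp (- v) = l1) by (unfold s; rewrite exp_Ropp; field; apply Rgt_not_eq, exp_pos).
      destruct (Rle_lt_dec s S) as [HsS|HsS].
      + eapply Rle_trans. apply Rmult_le_compat_r; [left; apply exp_pos|]. apply (F_le B b binv HY HBint Hbinv).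
        replace (s * binv s * exp (- v)) with (l1 * binv s) by (rewrite <- Hsv; ring).
        assert (binv s <= binv S) by (apply (binv_mono b binv Hbinv); lra).
        assert (binv S <= C * (1 + E)) by (unfold C; assert (0 < 1/beta) by (apply Rdiv_lt_0_compat; lra); nra).
        rewrite Rmult_assoc. apply Rmult_le_compat_l; lra.
      + destruct (HPW s ltac:(lra)) as [Hr [HBr Hy]].
        set (r := binv s) in *. rewrite HBr.
        replace (s * exp ((1 - beta) * ln r) / beta * exp (- v)) with (l1 * (exp ((1 - beta) * ln r) / beta))
          by (rewrite <- Hsv; field; lra).
        rewrite Rmult_assoc. apply Rmult_le_compat_l; [lra|].
        set (y := exp (beta * ln r)) in *.
        assert (Hlns : ln s = ln l1 + v) by (unfold s; rewrite ln_mult, ln_exp; [reflexivity|lra|apply exp_pos]).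
        assert (HlnS : ln S <= ln s) by (apply ln_le; lra).
        assert (Hl1' : ln l1 <= 0) by (rewrite <- ln_1; apply ln_le; lra).
        assert (HvT : v <= T ^ 2 / 2) by (unfold v; nra).
        assert (Hy1 : 1 <= y) by nra.
        assert (HyT : y <= T * T) by nra.
        assert (Hlny : 0 <= ln y) by (rewrite <- ln_1; apply ln_le; lra).
        assert (HlnyT : ln y <= 2 * ln T) by (replace (2 * ln T) with (ln T + ln T) by ring;
            rewrite <- ln_mult by lra; apply ln_le; lra).
        assert (E1 : (1 - beta) * ln r = p * ln y) by (unfold y, p; rewrite ln_exp; field; lra).
        rewrite E1.
        assert (Hpy : exp (p * ln y) <= E).
        { apply exp_le. destruct (Rle_lt_dec p 0) as [hp|hp].
          - rewrite Rmax_left by lra. nra.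
          - rewrite Rmax_right by lra. apply Rmult_le_compat_l; lra. }
        assert (0 < exp (p * ln y)) by apply exp_pos.
        assert (0 < 1/beta) by (apply Rdiv_lt_0_compat; lra).
        unfold C. unfold Rdiv. rewrite Rmult_1_l. nra. }
    rewrite RInt_const in Hb1. unfold scal in Hb1; simpl in Hb1; unfold mult in Hb1; simpl in Hb1.
    set (K1 := l1 * exp kap * exp (- (p * ln 2)) / beta).
    destruct (RInt_pow Phi (2/beta - 1) K1 T t HPhi ltac:(lra)) as [Eh Ih].
    assert (Hb2 : RInt g T t <= RInt (fun x => K1 * exp ((2/beta - 1 - 1) * ln x)) T t).
    { apply RInt_le; auto; try lra.
      intros tau Htau. eapply Rle_trans; [apply (Hmono l1); lra|].
      destruct (Hpt l1 tau ltac:(lra) ltac:(lra) ltac:(lra)) as [Heq Hab].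
      rewrite Heq. apply Rabs_le_between in Hab.
      set (A := (1 - beta) * ln (binv (l1 * exp (tau ^ 2 / 2)))) in *.
      assert (HA : exp A <= exp kap * exp (- (p * ln 2)) * exp ((2 / beta - 1 - 1) * ln tau))
        by (rewrite <- !exp_plus; apply exp_le; lra).
      assert (0 < l1 * / beta) by (apply Rmult_lt_0_compat; [lra|apply Rinv_0_lt_compat; lra]).
      cbv beta.
      replace (l1 * exp A / beta) with ((l1 * / beta) * exp A) by (field; lra).
      replace (K1 * exp ((2 / beta - 1 - 1) * ln tau))
        with ((l1 * / beta) * (exp kap * exp (- (p * ln 2)) * exp ((2 / beta - 1 - 1) * ln tau)))
        by (unfold K1; field; repeat split; try lra; apply Rgt_not_eq, exp_pos).
      apply Rmult_le_compat_l; lra. }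
    rewrite Ih in Hb2.
    assert (HK1 : K1 * Phi t = (1 - delta) * exp kap * W).
    { unfold K1, l1, W. rewrite <- HLe. unfold p. field. lra. }
    assert (0 <= K1) by (unfold K1; apply Rlt_le; apply Rdiv_lt_0_compat; [|lra];
       repeat apply Rmult_lt_0_compat; try lra; apply exp_pos).
    assert (K1 * (Phi t - Phi T) <= K1 * Phi t) by nra.
    assert (T * (l1 * C * (1 + E)) < delta / 2 * W) by (unfold E, p, W;
      replace (T * (l1 * C * (1 + exp (Rmax 0 ((1 - beta) / beta) * (2 * ln T)))))
        with (l1 * T * C * (1 + exp (Rmax 0 ((1 - beta) / beta) * (2 * ln T)))) by ring; exact HC6).
    assert ((1 - delta) * exp kap * W <= (1 - delta) * (1 + delta/2) * W)
      by (apply Rmult_le_compat_r; [lra|]; apply Rmult_le_compat_l; lra).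
    assert (0 < delta * delta * W) by (apply Rmult_lt_0_compat; [nra|lra]).
    nra.
  -
    destruct (Rle_lt_dec (lam t) l0) as [Hok|Hlt]; [exact Hok|exfalso].
    set (K0 := l0 * / exp kap * exp (- (p * ln 2)) / beta).
    destruct (RInt_pow Phi (2/beta - 1) K0 T t HPhi ltac:(lra)) as [Eh Ih].
    assert (Hb2 : RInt (fun x => K0 * exp ((2/beta - 1 - 1) * ln x)) T t <= RInt g T t).
    { apply RInt_le; auto; try lra.
      intros tau Htau. eapply Rle_trans; [|apply (Hmono' l0); lra].
      destruct (Hpt l0 tau ltac:(lra) ltac:(lra) ltac:(lra)) as [Heq Hab].
      rewrite Heq. apply Rabs_le_between in Hab.
      set (A := (1 - beta) * ln (binv (l0 * exp (tau ^ 2 / 2)))) in *.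
      assert (HA : / exp kap * exp (- (p * ln 2)) * exp ((2 / beta - 1 - 1) * ln tau) <= exp A)
        by (rewrite <- exp_Ropp, <- !exp_plus; apply exp_le; lra).
      assert (0 < l0 * / beta) by (apply Rmult_lt_0_compat; [lra|apply Rinv_0_lt_compat; lra]).
      cbv beta.
      replace (l0 * exp A / beta) with ((l0 * / beta) * exp A) by (field; lra).
      replace (K0 * exp ((2 / beta - 1 - 1) * ln tau))
        with ((l0 * / beta) * (/ exp kap * exp (- (p * ln 2)) * exp ((2 / beta - 1 - 1) * ln tau)))
        by (unfold K0; field; repeat split; try lra; apply Rgt_not_eq, exp_pos).
      apply Rmult_le_compat_l; lra. }
    rewrite Ih in Hb2.
    assert (Hb1 : RInt (fun _ => 0) 0 T <= RInt g 0 T).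
    { apply RInt_le; auto; [lra|apply ex_RInt_const|].
      intros tau Htau. unfold g. apply Rmult_le_pos; [|left; apply exp_pos].
      destruct HY as [_ [HBp _]]. apply HBp. apply (inf0 b binv Hbinv). }
    rewrite RInt_const in Hb1. unfold scal in Hb1; simpl in Hb1; unfold mult in Hb1; simpl in Hb1.
    assert (Hek : 0 < exp kap) by apply exp_pos.
    assert (HK0 : K0 * Phi t * exp kap = (1 + delta) * W).
    { unfold K0, l0, W. rewrite <- HLe. unfold p. field. split; [lra|apply Rgt_not_eq, exp_pos]. }
    assert (0 <= K0) by (unfold K0; apply Rlt_le; apply Rdiv_lt_0_compat; [|lra];
       repeat apply Rmult_lt_0_compat; try lra; try apply exp_pos; apply Rinv_0_lt_compat; lra).
    assert (K0 * (1 - delta/8) * Phi t <= K0 * (Phi t - Phi T)) by nra.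
    assert (H1 : K0 * (1 - delta/8) * Phi t <= W) by lra.
    apply (Rmult_le_compat_r (exp kap)) in H1; [|lra].
    replace (K0 * (1 - delta / 8) * Phi t * exp kap) with ((1 - delta/8) * (K0 * Phi t * exp kap)) in H1 by ring.
    rewrite HK0 in H1.
    assert (W * exp kap <= W * (1 + delta/2)) by (apply Rmult_le_compat_l; lra).
    assert (0 < W * delta) by (apply Rmult_lt_0_compat; lra).
    assert (0 < W * delta * (3 - delta)) by (apply Rmult_lt_0_compat; lra).
    nra.
Qed.

Definition evx (P : R -> Prop) := exists X, forall x, X <= x -> P x.

Lemma evx_and P Q : evx P -> evx Q -> evx (fun x => P x /\ Q x).
Proof.
  intros [X1 H1] [X2 H2]. exists (Rmax X1 X2). intros x Hx.
  pose proof (Rmax_l X1 X2); pose proof (Rmax_r X1 X2). split; [apply H1|apply H2]; lra.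
Qed.

Lemma evx_ge a : evx (fun x => a <= x).
Proof. exists a. auto. Qed.

Lemma evx_mono (P Q : R -> Prop) : evx P -> (forall x, P x -> Q x) -> evx Q.
Proof. intros [X H] HQ. exists X. auto. Qed.

Lemma evx_sqrt a b A : 0 < b -> evx (fun x => a * sqrt x - b * x <= A).
Proof. intros Hb. destruct (sqrt_dom a b A Hb) as [X [_ H]]. exists X. auto. Qed.

Lemma ev_ln (P : R -> Prop) : evx (fun x => forall t, x = ln t -> 1 < t -> P t) ->
  exists M, 1 <= M /\ forall t, M < t -> P t.
Proof.
  intros [X H]. exists (Rmax 1 (exp X)). split. apply Rmax_l.
  intros t Ht. pose proof (Rmax_l 1 (exp X)). pose proof (Rmax_r 1 (exp X)).
  apply (H (ln t)); [|reflexivity|lra].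
  rewrite <- (ln_exp X). apply ln_le. apply exp_pos. lra.
Qed.

Lemma lnT_le K x : 0 < K -> 1 <= 2 * K * x -> 0 <= ln (sqrt (2 * K * x)) <= sqrt (2 * K) * sqrt x /\
   1 <= sqrt (2 * K * x) /\ sqrt (2 * K * x) ^ 2 = 2 * K * x.
Proof.
  intros HK Hx. assert (0 <= x) by nra.
  assert (H1 : 1 <= sqrt (2 * K * x)) by (rewrite <- sqrt_1; apply sqrt_le_1_alt; lra).
  assert (E : sqrt (2 * K * x) = sqrt (2 * K) * sqrt x) by (apply sqrt_mult; lra).
  split; [split|split].
  - rewrite <- ln_1. apply ln_le; lra.
  - rewrite <- E. pose proof (ln_le_xm1 (sqrt (2 * K * x)) ltac:(lra)). lra.
  - auto.
  - simpl. rewrite Rmult_1_r. apply sqrt_sqrt. nra.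
Qed.

Lemma c_beta_pos beta : 0 < beta < 2 -> 0 < c_beta beta.
Proof.
  intros Hb. unfold c_beta. apply Rmult_lt_0_compat; [apply Rmult_lt_0_compat|lra].
  unfold Rpower; apply exp_pos. apply sqrt_lt_R0, PI_RGT_0.
Qed.

Lemma case_lt_T beta delta : 0 < beta < 2 -> 0 < delta <= 1/2 ->
  forall eps S C, 0 < eps < 1 -> 1 < S -> 0 < C -> exists T : R -> R, exists M, 1 <= M /\
      forall t, M < t ->
      1 <= T t <= t /\ (1+delta)*c_beta beta*(fun t => Rpower t (1 - 2/beta)) t <= 1 /\
      - (eps * ((T t)^2/2)) <= ln ((1-delta)*c_beta beta*(fun t => Rpower t (1 - 2/beta)) t) /\
      ln S <= (1-eps)*((T t)^2/2) /\
      0 <= (fun x => exp ((2/beta - 1) * ln x) / (2/beta - 1)) (T t) /\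
      (fun x => exp ((2/beta - 1) * ln x) / (2/beta - 1)) (T t) <=
         delta/8 * (fun x => exp ((2/beta - 1) * ln x) / (2/beta - 1)) t /\
      (1-delta)*c_beta beta*(fun t => Rpower t (1 - 2/beta)) t * T t * C *
        (1 + exp (Rmax 0 ((1-beta)/beta) * (2 * ln (T t)))) < delta/2 * sqrt (2*PI).
Proof.
  intros Hb Hd eps S C He HS HC. cbv beta.
  set (q := 2/beta - 1).
  assert (Hq : 0 < q).
  { unfold q. assert (1 < 2 / beta). { apply (Rmult_lt_reg_r beta); [lra|]. unfold Rdiv. rewrite Rmult_assoc, Rinv_l; lra. } lra. }
  set (c := c_beta beta). assert (Hc : 0 < c) by apply (c_beta_pos beta Hb).
  set (pp := Rmax 0 ((1 - beta) / beta)). assert (Hpp : 0 <= pp) by apply Rmax_l.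
  set (W := sqrt (2 * PI)). assert (HW : 0 < W) by (apply sqrt_lt_R0; pose proof PI_RGT_0; lra).
  set (K := (q + 1) / eps). assert (HK : 0 < K) by (apply Rdiv_lt_0_compat; lra).
  exists (fun t => sqrt (2 * K * ln t)).
  apply ev_ln.
  pose proof (evx_and _ _ (evx_ge (Rmax 1 (1/(2*K)))) (evx_ge (2 * K))) as E.
  pose proof (evx_and _ _ E (evx_ge (ln ((1 + delta) * c) / q))) as E'. clear E.
  pose proof (evx_and _ _ E' (evx_ge (- ln ((1 - delta) * c)))) as E. clear E'.
  pose proof (evx_and _ _ E (evx_ge (ln S / ((1 - eps) * K)))) as E'. clear E.
  pose proof (evx_and _ _ E' (evx_sqrt (q * sqrt (2 * K)) q (ln (delta / 8)) Hq)) as E. clear E'.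
  pose proof (evx_and _ _ E (evx_sqrt ((1 + 2 * pp) * sqrt (2 * K)) q
      (ln (delta * W / (8 * (1 - delta) * c * C))) Hq)) as E'. clear E.
  apply (evx_mono _ _ E'). clear E'.
  intros x [[[[[[H1 H2] H3] H4] H5] H6] H7] t Hxt Ht.
  rewrite <- Hxt.
  assert (Hx1 : 1 <= x) by (pose proof (Rmax_l 1 (1/(2*K))); lra).
  assert (Hx2 : 1 <= 2 * K * x).
  { pose proof (Rmax_r 1 (1/(2*K))). assert (1/(2*K) <= x) by lra.
    apply (Rmult_le_compat_l (2*K)) in H0; [|lra]. unfold Rdiv in H0. rewrite Rmult_1_l, Rinv_r in H0 by lra. lra. }
  destruct (lnT_le K x HK Hx2) as [[HlT1 HlT2] [HT1 HT2]].
  set (T := sqrt (2 * K * x)) in *.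
  assert (Hsx : 0 <= sqrt x) by apply sqrt_pos.
  assert (Ht_exp : t = exp x) by (rewrite Hxt, exp_ln; lra).
  assert (HL : Rpower t (1 - 2 / beta) = exp (- (q * x))).
  { unfold Rpower. rewrite <- Hxt. unfold q. f_equal. ring. }
  rewrite HL.
  assert (Hl1 : 0 < 1 - delta) by lra.
  split; [split; [lra|]|].
  {
    pose proof (exp_ineq1_le x). rewrite <- Ht_exp in H.
    destruct (Rle_lt_dec T t) as [h|h]; auto.
    assert (t * t < T * T) by (apply Rmult_le_0_lt_compat; lra).
    assert (T * T = 2 * K * x) by (rewrite <- HT2; ring).
    nra. }
  split.
  { assert (H3q : ln ((1 + delta) * c) <= q * x).
    { apply (Rmult_le_compat_l q) in H3; [|lra].
      replace (q * (ln ((1 + delta) * c) / q)) with (ln ((1 + delta) * c)) in H3 by (field; lra). lra. }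
    rewrite <- (exp_ln ((1 + delta) * c)) by nra. rewrite <- exp_plus.
    apply Rle_trans with (exp 0); [apply exp_le; lra | rewrite exp_0; lra]. }
  split.
  { rewrite ln_mult, ln_exp by (try nra; apply exp_pos). rewrite HT2.
    replace (eps * (2 * K * x / 2)) with ((q + 1) * x) by (unfold K; field; lra). nra. }
  split.
  { rewrite HT2. apply (Rmult_le_compat_l ((1 - eps) * K)) in H5; [|nra].
    replace ((1 - eps) * K * (ln S / ((1 - eps) * K))) with (ln S) in H5 by (field; nra).
    lra. }
  split.
  { apply Rlt_le, Rdiv_lt_0_compat; [apply exp_pos|lra]. }
  split.
  { fold q. try rewrite <- Hxt.
    assert (exp (q * ln T) <= delta / 8 * exp (q * x)).
    { rewrite <- (exp_ln (delta / 8)) at 1 by lra. rewrite <- exp_plus. apply exp_le. nra. }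
    unfold Rdiv. rewrite <- Rmult_assoc. apply Rmult_le_compat_r; [left; apply Rinv_0_lt_compat|]; lra. }
  fold pp. fold W.
  set (E := exp (pp * (2 * ln T))).
  assert (HE1 : 1 <= E) by (unfold E; rewrite <- exp_0; apply exp_le; nra).
  assert (HTE : T * E = exp ((1 + 2 * pp) * ln T)).
  { unfold E. rewrite <- (exp_ln T) at 1 by lra. rewrite <- exp_plus. f_equal. ring. }
  set (A := ln (delta * W / (8 * (1 - delta) * c * C))).
  assert (HA : exp (- (q * x) + (1 + 2 * pp) * ln T) <= exp A).
  { apply exp_le. assert ((1 + 2 * pp) * ln T <= (1 + 2 * pp) * (sqrt (2 * K) * sqrt x)) by (apply Rmult_le_compat_l; lra).
    rewrite Rmult_assoc in H7. fold A in H7. lra. }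
  assert (HeA : exp A = delta * W / (8 * (1 - delta) * c * C)).
  { unfold A. apply exp_ln. apply Rdiv_lt_0_compat. nra.
    assert (0 < (1 - delta) * c * C) by (apply Rmult_lt_0_compat; [apply Rmult_lt_0_compat|]; lra). lra. }
  rewrite exp_plus, HeA in HA. rewrite <- HTE in HA.
  assert (Hpos : 0 < (1 - delta) * c * C) by (apply Rmult_lt_0_compat; [apply Rmult_lt_0_compat|]; lra).
  assert (HeqE : (1 - delta) * c * exp (- (q * x)) * T * C * (1 + E) <=
     2 * ((1 - delta) * c * C) * (exp (- (q * x)) * (T * E))).
  { assert (0 <= exp (- (q * x)) * T) by (apply Rmult_le_pos; [left; apply exp_pos|lra]).
    replace ((1 - delta) * c * exp (- (q * x)) * T * C * (1 + E)) with
      (((1 - delta) * c * C) * (exp (- (q * x)) * T) * (1 + E)) by ring.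
    replace (2 * ((1 - delta) * c * C) * (exp (- (q * x)) * (T * E))) with
      (((1 - delta) * c * C) * (exp (- (q * x)) * T) * (2 * E)) by ring.
    apply Rmult_le_compat_l; [apply Rmult_le_pos|]; lra. }
  assert (2 * ((1 - delta) * c * C) * (exp (- (q * x)) * (T * E)) <= 2 * (delta * W / 8)).
  { apply (Rmult_le_compat_l ((1 - delta) * c * C)) in HA; [|lra].
    replace ((1 - delta) * c * C * (delta * W / (8 * (1 - delta) * c * C))) with (delta * W / 8) in HA by (field; repeat split; try lra; apply Rgt_not_eq; lra).
    lra. }
  assert (0 < delta * W) by nra.
  lra.
Qed.

Lemma case_eq_T beta delta : beta = 2 -> 0 < delta <= 1/2 ->
  forall eps S C, 0 < eps < 1 -> 1 < S -> 0 < C -> exists T : R -> R, exists M, 1 <= M /\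
      forall t, M < t ->
      1 <= T t <= t /\ (1+delta)*(2 * sqrt PI)*(fun t => / ln t) t <= 1 /\
      - (eps * ((T t)^2/2)) <= ln ((1-delta)*(2 * sqrt PI)*(fun t => / ln t) t) /\
      ln S <= (1-eps)*((T t)^2/2) /\
      0 <= ln (T t) /\ ln (T t) <= delta/8 * ln t /\
      (1-delta)*(2 * sqrt PI)*(fun t => / ln t) t * T t * C *
        (1 + exp (Rmax 0 ((1-beta)/beta) * (2 * ln (T t)))) < delta/2 * sqrt (2*PI).
Proof.
  intros Hb Hd eps S C He HS HC. subst beta. cbv beta.
  set (c := 2 * sqrt PI). assert (Hc : 0 < c) by (unfold c; pose proof (sqrt_lt_R0 PI PI_RGT_0); lra).
  set (W := sqrt (2 * PI)). assert (HW : 0 < W) by (apply sqrt_lt_R0; pose proof PI_RGT_0; lra).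
  set (K := 2 / eps). assert (HK : 0 < K) by (apply Rdiv_lt_0_compat; lra).
  assert (Hpos : 0 < (1 - delta) * c * C) by (apply Rmult_lt_0_compat; [apply Rmult_lt_0_compat|]; lra).
  set (a := 2 * ((1 - delta) * c * C) * sqrt (2 * K)).
  assert (HdW : 0 < delta / 2 * W) by nra.
  exists (fun t => sqrt (2 * K * ln t)).
  apply ev_ln.
  pose proof (evx_and _ _ (evx_ge (Rmax 1 (1/(2*K)))) (evx_ge (2 * K))) as E.
  pose proof (evx_and _ _ E (evx_ge ((1 + delta) * c))) as E'. clear E.
  pose proof (evx_and _ _ E' (evx_ge (- ln ((1 - delta) * c)))) as E. clear E'.
  pose proof (evx_and _ _ E (evx_ge (ln S / ((1 - eps) * K)))) as E'. clear E.
  pose proof (evx_and _ _ E' (evx_sqrt (sqrt (2 * K)) (delta / 8) 0 ltac:(lra))) as E. clear E'.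
  pose proof (evx_and _ _ E (evx_sqrt a (delta / 2 * W) (-1) HdW)) as E'. clear E.
  apply (evx_mono _ _ E'). clear E'.
  intros x [[[[[[H1 H2] H3] H4] H5] H6] H7] t Hxt Ht.
  rewrite <- Hxt.
  assert (Hx1 : 1 <= x) by (pose proof (Rmax_l 1 (1/(2*K))); lra).
  assert (Hx2 : 1 <= 2 * K * x).
  { pose proof (Rmax_r 1 (1/(2*K))). assert (1/(2*K) <= x) by lra.
    apply (Rmult_le_compat_l (2*K)) in H0; [|lra].
    replace (2 * K * (1 / (2 * K))) with 1 in H0 by (field; lra). lra. }
  destruct (lnT_le K x HK Hx2) as [[HlT1 HlT2] [HT1 HT2]].
  assert (ET : sqrt (2 * K * x) = sqrt (2 * K) * sqrt x) by (apply sqrt_mult; lra).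
  set (T := sqrt (2 * K * x)) in *.
  assert (Hsx : 0 < sqrt x) by (apply sqrt_lt_R0; lra).
  assert (Ht_exp : t = exp x) by (rewrite Hxt, exp_ln; lra).
  assert (Hl1 : 0 < 1 - delta) by lra.
  split; [split; [lra|]|].
  { pose proof (exp_ineq1_le x). rewrite <- Ht_exp in H.
    destruct (Rle_lt_dec T t) as [h|h]; auto.
    assert (t * t < T * T) by (apply Rmult_le_0_lt_compat; lra).
    assert (T * T = 2 * K * x) by (rewrite <- HT2; ring).
    nra. }
  split.
  { apply (Rmult_le_reg_r x); [lra|]. rewrite Rmult_assoc, Rinv_l by lra. lra. }
  split.
  { rewrite ln_mult, ln_Rinv by (try nra; try lra; apply Rinv_0_lt_compat; lra). rewrite HT2.
    replace (eps * (2 * K * x / 2)) with (2 * x) by (unfold K; field; lra).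
    pose proof (ln_le_xm1 x ltac:(lra)). lra. }
  split.
  { rewrite HT2. apply (Rmult_le_compat_l ((1 - eps) * K)) in H5; [|nra].
    replace ((1 - eps) * K * (ln S / ((1 - eps) * K))) with (ln S) in H5 by (field; nra).
    lra. }
  split; [lra|].
  split; [lra|].
  rewrite Rmax_left by lra. rewrite Rmult_0_l, exp_0.
  fold W.
  replace ((1 - delta) * c * / x * T * C * (1 + 1)) with (a * sqrt x / x)
    by (unfold a; rewrite ET; field; lra).
  apply (Rmult_lt_reg_r x); [lra|]. unfold Rdiv. rewrite Rmult_assoc, Rinv_l by lra. lra.
Qed.

Lemma sqrt2PI : sqrt (2 * PI) = exp (/ 2 * ln 2) * sqrt PI.
Proof.
  rewrite sqrt_mult by (try lra; pose proof PI_RGT_0; lra).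
  rewrite <- Rpower_sqrt by lra. reflexivity.
Qed.

Lemma lt_HPhi beta : 0 < beta < 2 -> forall x, 0 < x ->
  is_derive (fun x => exp ((2/beta - 1) * ln x) / (2/beta - 1)) x (exp ((2/beta - 1 - 1) * ln x)).
Proof.
  intros Hb x Hx.
  assert (Hq : 0 < 2/beta - 1).
  { assert (1 < 2 / beta). { apply (Rmult_lt_reg_r beta); [lra|]. unfold Rdiv. rewrite Rmult_assoc, Rinv_l; lra. } lra. }
  auto_derive. lra.
  replace ((2 / beta - 1 - 1) * ln x) with ((2/beta - 1) * ln x + - ln x) by ring.
  rewrite exp_plus, exp_Ropp, exp_ln by lra. field. lra.
Qed.

Lemma eq_HPhi : forall x, 0 < x -> is_derive ln x (exp ((2/2 - 1 - 1) * ln x)).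
Proof.
  intros x Hx. auto_derive. lra.
  replace ((2 / 2 - 1 - 1) * ln x) with (- ln x) by field.
  rewrite exp_Ropp, exp_ln by lra. field. lra.
Qed.

Lemma lt_HL beta : 0 < beta < 2 -> forall t, 1 < t ->
  0 < (fun t => Rpower t (1 - 2/beta)) t /\
  c_beta beta * (fun t => Rpower t (1 - 2/beta)) t * exp (- ((1-beta)/beta * ln 2)) *
     (fun x => exp ((2/beta - 1) * ln x) / (2/beta - 1)) t / beta = sqrt (2*PI).
Proof.
  intros Hb t Ht. cbv beta. split. unfold Rpower; apply exp_pos.
  assert (Hq : 0 < 2/beta - 1).
  { assert (1 < 2 / beta). { apply (Rmult_lt_reg_r beta); [lra|]. unfold Rdiv. rewrite Rmult_assoc, Rinv_l; lra. } lra. }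
  rewrite sqrt2PI. unfold c_beta, Rpower.
  set (q := 2 / beta - 1) in *.
  transitivity (exp ((1 / beta - 1 / 2) * ln 2 + (1 - 2 / beta) * ln t + - ((1 - beta) / beta * ln 2) + q * ln t)
     * sqrt PI * ((2 - beta) / (q * beta))).
  { rewrite !exp_plus. field. split; lra. }
  replace ((2 - beta) / (q * beta)) with 1 by (unfold q; field; split; lra).
  rewrite Rmult_1_r. f_equal. f_equal. unfold q. field. lra.
Qed.

Lemma eq_HL : forall t, 1 < t ->
  0 < (fun t => / ln t) t /\
  (2 * sqrt PI) * (fun t => / ln t) t * exp (- ((1-2)/2 * ln 2)) * ln t / 2 = sqrt (2*PI).
Proof.
  intros t Ht. cbv beta. assert (0 < ln t) by (rewrite <- ln_1; apply ln_increasing; lra).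
  split. apply Rinv_0_lt_compat; lra.
  rewrite sqrt2PI. replace (- ((1 - 2) / 2 * ln 2)) with (/ 2 * ln 2) by field. field. lra.
Qed.

Lemma ratio_close (lam cl delta eps : R) : 0 < cl -> 0 < delta -> delta < eps ->
  (1 - delta) * cl <= lam <= (1 + delta) * cl -> Rabs (lam / cl - 1) < eps.
Proof.
  intros Hc Hd He [H1 H2]. apply Rabs_def1.
  - apply (Rmult_lt_reg_r cl); auto. unfold Rdiv. rewrite Rmult_minus_distr_r, Rmult_assoc, Rinv_l by lra. nra.
  - apply (Rmult_lt_reg_r cl); auto. unfold Rdiv. rewrite Rmult_minus_distr_r, Rmult_assoc, Rinv_l by lra. nra.
Qed.

Theorem lemma3p6
  (beta N t0 : R) (B b binv lam : R -> R)
  (Hbeta : 0 < beta <= 2) (HN : 0 < N) (Ht0 : 0 < t0)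
  (HY : young B)
  (HBexp : forall t, t0 < t -> B t = N * exp (Rpower t beta))
  (Hbmono : nondecr_on_nonneg b)
  (Hblc : left_cont_pos b)
  (HBint : forall t, 0 <= t ->
     exists pr : Riemann_integrable b 0 t, RiemannInt pr = B t)
  (Hbinv : is_gen_inv b binv)
  (Hlam : forall t, 0 < t -> 0 < lam t /\
     exists pr : Riemann_integrable
         (fun tau => B (binv (lam t * exp (tau ^ 2 / 2))) * exp (- (tau ^ 2 / 2))) 0 t,
       RiemannInt pr = sqrt (2 * PI)) :
  (beta < 2 ->
     lim_infty (fun t => lam t / (c_beta beta * Rpower t (1 - 2 / beta))) 1) /\
  (beta = 2 ->
     lim_infty (fun t => lam t * ln t / (2 * sqrt PI)) 1).
Proof.
  split.
  - intros Hlt eps Heps.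
    set (delta := Rmin (eps / 2) (1 / 2)).
    assert (Hd : 0 < delta <= 1/2) by (unfold delta; split; [apply Rmin_glb_lt; lra|apply Rmin_r]).
    assert (Hde : delta < eps) by (unfold delta; pose proof (Rmin_l (eps/2) (1/2)); lra).
    destruct (core beta N t0 B b binv lam ltac:(lra) HN Ht0 HY HBexp Hbmono HBint Hbinv Hlam
      (c_beta beta) (fun t => Rpower t (1 - 2/beta)) (fun x => exp ((2/beta - 1) * ln x) / (2/beta - 1)) delta
      (c_beta_pos beta ltac:(lra)) Hd (lt_HPhi beta ltac:(lra)) (lt_HL beta ltac:(lra))
      (case_lt_T beta delta ltac:(lra) Hd)) as [M HM].
    exists (Rmax M 1). intros t Ht. pose proof (Rmax_l M 1). pose proof (Rmax_r M 1).
    destruct (HM t ltac:(lra)) as [H1 H2]. cbv beta in H1, H2.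
    assert (Hcl : 0 < c_beta beta * Rpower t (1 - 2 / beta)).
    { apply Rmult_lt_0_compat. apply c_beta_pos; lra. unfold Rpower; apply exp_pos. }
    apply (ratio_close _ _ delta eps Hcl ltac:(lra) Hde). split; lra.
  - intros Heq eps Heps. subst beta.
    set (delta := Rmin (eps / 2) (1 / 2)).
    assert (Hd : 0 < delta <= 1/2) by (unfold delta; split; [apply Rmin_glb_lt; lra|apply Rmin_r]).
    assert (Hde : delta < eps) by (unfold delta; pose proof (Rmin_l (eps/2) (1/2)); lra).
    assert (Hc : 0 < 2 * sqrt PI) by (pose proof (sqrt_lt_R0 PI PI_RGT_0); lra).
    destruct (core 2 N t0 B b binv lam ltac:(lra) HN Ht0 HY HBexp Hbmono HBint Hbinv Hlam
      (2 * sqrt PI) (fun t => / ln t) ln delta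
      Hc Hd eq_HPhi eq_HL
      (case_eq_T 2 delta eq_refl Hd)) as [M HM].
    exists (Rmax M 1). intros t Ht. pose proof (Rmax_l M 1). pose proof (Rmax_r M 1).
    destruct (HM t ltac:(lra)) as [H1 H2]. cbv beta in H1, H2.
    assert (Hlt : 0 < ln t) by (rewrite <- ln_1; apply ln_increasing; lra).
    replace (lam t * ln t / (2 * sqrt PI)) with (lam t / (2 * sqrt PI * / ln t))
      by (field; split; lra).
    assert (Hcl : 0 < 2 * sqrt PI * / ln t).
    { apply Rmult_lt_0_compat; auto. apply Rinv_0_lt_compat; lra. }
    apply (ratio_close _ _ delta eps Hcl ltac:(lra) Hde). split; lra.
Qed.
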